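(* Every pseudocompact space $X$ is $\sigma^*_{C(X)}$-$\alpha$-favorable.
   Context: A space is pseudocompact if it is Tychonoff and every real continuous function on it is bounded. $C(X)$ is the set of real continuous functions on $X$. The game $\mathcal J^*_{C(X)}$ on $X$: players $\beta$ and $\alpha$ alternately choose nonempty open sets $V_0\supseteq U_0\supseteq V_1\supseteq U_1\supseteq\cdots$ of $X$, $\beta$ choosing the $V_n$ (starting with $V_0$) and $\alpha$ the $U_n$. $\alpha$ wins the play iff for every sequence $(a_n)$ with $a_n\in U_n$ and every $g\in C(X)$ there is $t\in\bigcap_nU_n$ with $g(t)\in\overline{\{g(a_n):n\in\mathbb N\}}$. $X$ is $\sigma^*_{C(X)}$-$\alpha$-favorable if $\alpha$ has a winning strategy in this game. *)

(* Defs.v *)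
From HB Require Import structures.
From mathcomp Require Import all_boot all_order all_algebra.
From mathcomp Require Import all_classical all_reals all_analysis.
From mathcomp Require Import Rstruct Rstruct_topology.
From Stdlib Require Rdefinitions.
Set Implicit Arguments. Unset Strict Implicit. Unset Printing Implicit Defensive.
Import Order.TTheory GRing.Theory Num.Theory.
Local Open Scope classical_set_scope.
Local Open Scope ring_scope.

Definition tychonoff (X : topologicalType) : Prop :=
  accessible_space X /\ completely_regular_space X.

Definition pseudocompact (X : topologicalType) : Prop :=
  tychonoff X /\
  forall g : X -> Rdefinitions.R, continuous g -> exists M : Rdefinitions.R, forall x, `|g x| <= M.

(* A strategy for alpha: given beta's moves [:: V_0; ...; V_n] so far,
   it returns alpha's answer U_n. (alpha's own earlier moves are determined
   by the strategy, so this loses no generality.) *)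
Definition alpha_strategy (X : topologicalType) := seq (set X) -> set X.

Definition alpha_moves (X : topologicalType) (st : alpha_strategy X)
  (V : nat -> set X) (n : nat) : set X :=
  st [seq V k | k <- iota 0 n.+1].

Definition beta_legal_upto (X : topologicalType) (st : alpha_strategy X)
  (V : nat -> set X) (n : nat) : Prop :=
  (forall k, (k <= n)%N -> open (V k) /\ V k !=set0) /\
  (forall k, (k < n)%N -> V k.+1 `<=` alpha_moves st V k).

Definition alpha_strategy_legal (X : topologicalType) (st : alpha_strategy X) :=
  forall (V : nat -> set X) (n : nat), beta_legal_upto st V n ->
    open (alpha_moves st V n) /\ alpha_moves st V n !=set0 /\
    alpha_moves st V n `<=` V n.

Definition alpha_wins_play (X : topologicalType) (U : nat -> set X) : Prop :=
  forall (a : nat -> X), (forall n, U n (a n)) ->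
  forall g : X -> Rdefinitions.R, continuous g ->
  exists t : X, (\bigcap_n U n) t /\ closure (range (g \o a)) (g t).

Definition alpha_winning_strategy (X : topologicalType) (st : alpha_strategy X) :=
  alpha_strategy_legal st /\
  forall V : nat -> set X, (forall n, beta_legal_upto st V n) ->
    alpha_wins_play (alpha_moves st V).

Definition sigma_star_CX_alpha_favorable (X : topologicalType) : Prop :=
  exists st : alpha_strategy X, alpha_winning_strategy st.

(* Main.v *)
From HB Require Import structures.
From mathcomp Require Import all_boot all_order all_algebra.
From mathcomp Require Import all_classical all_reals all_analysis.
From mathcomp Require Import Rstruct Rstruct_topology.
Require Import Defs.
From Stdlib Require Rdefinitions.
Set Implicit Arguments. Unset Strict Implicit. Unset Printing Implicit Defensive.
Import Order.TTheory GRing.Theory Num.Theory.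
Local Open Scope classical_set_scope.
Local Open Scope ring_scope.

Notation RR := Rdefinitions.R.

Lemma last_alpha (X : topologicalType) (V : nat -> set X) n :
  last set0 [seq V k | k <- iota 0 n.+1] = V n.
Proof. by rewrite -addn1 iotaD map_cat last_cat /=. Qed.

Lemma shrink (X : topologicalType) (reg : regular_space X) (A : set X) :
  open A -> A !=set0 -> exists U, open U /\ U !=set0 /\ closure U `<=` A.
Proof.
move=> oA [x Ax].
have : nbhs x A by apply: open_nbhs_nbhs; split.
move=> /reg [C Cx CA].
exists (interior C); split; first exact: open_interior.
split; first by exists x; apply: nbhs_singleton; apply: nbhs_interior.
by apply: subset_trans CA; apply: closureS; apply: interior_subset.
Qed.

Section S.
Variable (X : topologicalType) (h : nat -> X -> RR).
Hypothesis h0 : forall k y, 0 <= h k y.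
Hypothesis hc : forall k, continuous (h k).
Definition SS m y := \sum_(k < m) k%:R * h k y.

Lemma SS_ge0 m y : 0 <= SS m y.
Proof. by apply: sumr_ge0 => k _; apply: mulr_ge0 => //; apply: h0. Qed.

Lemma SS_S m y : SS m.+1 y = SS m y + m%:R * h m y.
Proof. by rewrite /SS big_ord_recr. Qed.

Lemma SS_mono m n y : (m <= n)%N -> SS m y <= SS n y.
Proof.
elim: n => [|n IH]; first by rewrite leqn0 => /eqP ->.
rewrite leq_eqVlt => /orP [/eqP -> //|mn].
apply: le_trans (IH mn) _; rewrite SS_S lerDl mulr_ge0 //; exact: h0.
Qed.

Lemma SS_stable m n y : (m <= n)%N -> (forall k, (m <= k)%N -> h k y = 0) ->
  SS n y = SS m y.
Proof.
move=> mn H; elim: n mn => [|n IH]; first by rewrite leqn0 => /eqP ->.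
rewrite leq_eqVlt => /orP [/eqP -> //|mn].
by rewrite SS_S IH // H // mulr0 addr0.
Qed.

Lemma SS_cont m : continuous (SS m).
Proof.
elim: m => [|m IH] x.
  rewrite /SS; under eq_fun do rewrite big_ord0; exact: cvg_cst.
have -> : SS m.+1 = (fun y => SS m y + m%:R * h m y).
  by apply/funext => y; rewrite SS_S.
have I1 := IH x; have I2 := @hc m x.
apply: (@continuousD _ RR^o _ (SS m) (fun y => m%:R * h m y) x I1).
exact: (@continuousM _ _ (fun=> m%:R) (h m) x (cvg_cst _) I2).

Qed.
End S.

Lemma cluster (X : topologicalType) (crs : completely_regular_space X)
  (bnd : forall g : X -> RR, continuous g -> exists M : RR, forall x, `|g x| <= M)
  (W : nat -> set X) (oW : forall k, open (W k)) (nW : forall k, W k !=set0) :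
  exists t : X, forall N, nbhs t N -> forall m, exists k, (m <= k)%N /\ (N `&` W k) !=set0.
Proof.
apply: contrapT => H.
have lf : forall t : X, exists N : set X, exists m, nbhs t N /\
    forall k y, (m <= k)%N -> N y -> ~ W k y.
  move=> t; apply: contrapT => Hn; apply: H; exists t => N Nt m.
  apply: contrapT => Hk; apply: Hn; exists N, m; split => // k y mk Ny Wky.
  by apply: Hk; exists k; split => //; exists y.
have [x xW] := choice nW.
have hex : forall k, exists f : X -> RR, [/\ continuous f, (forall y, 0 <= f y),
    f (x k) = 1 & forall y, ~ W k y -> f y = 0].
  move=> k.
  have cB : closed (~` W k) by rewrite closedC.
  have nB : ~ (~` W k) (x k) by move=> /(_ (xW k)).
  have /(@uniform_separatorP _ RR) [f [fc fr f0 f1]] := crs _ _ cB nB.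
  exists (fun y => 1 - f y); split.
  - move=> y; apply: (@continuousB _ RR^o _ (fun=> 1) f y (cvg_cst _) (fc y)).
  - move=> y; rewrite subr_ge0.
    have : `[0, 1]%classic (f y) by apply: fr; exists y.
    by rewrite /= in_itv /= => /andP [].
  - by rewrite (f0 (f (x k))) ?subr0 //; exists (x k).
  - by move=> y Wy; rewrite (f1 (f y)) ?subrr //; exists y.
have [h hP] := choice hex.
have hc k : continuous (h k) by case: (hP k).
have h0 k y : 0 <= h k y by case: (hP k).
have hx k : h k (x k) = 1 by case: (hP k).
have hW k y : ~ W k y -> h k y = 0 by case: (hP k) => _ _ _; apply.
have Mex : forall y, exists m, forall k, (m <= k)%N -> h k y = 0.
  move=> y; have [N [m [Ny HN]]] := lf y.
  exists m => k mk; apply: hW; apply: HN mk _; exact: nbhs_singleton.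
have [M HM] := choice Mex.
pose g y := SS h (M y) y.
have gE y m : (forall k, (m <= k)%N -> h k y = 0) -> g y = SS h m y.
  move=> Hm.
  have e1 := @SS_stable _ h (M y) (maxn (M y) m) y (leq_maxl _ _) (HM y).
  have e2 := @SS_stable _ h m (maxn (M y) m) y (leq_maxr _ _) Hm.
  by rewrite /g -e1 e2.
have gc : continuous g.
  move=> t; have [N [m0 [Nt HN]]] := lf t.
  have e : {near t, SS h m0 =1 g}.
    apply: (filterS _ Nt) => z Nz; rewrite (gE z m0) // => k mk.
    by apply: hW; apply: HN mk Nz.
  rewrite /continuous_at (gE t m0); last by move=> k mk; apply: hW; apply: HN mk (nbhs_singleton Nt).
  apply: cvg_trans (near_eq_cvg e) _.
  exact: SS_cont.
have [B HB] := bnd g gc.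
pose k := Num.bound `|B|.
have kB : `|B| < k%:R by apply: archi_boundP.
have : k%:R <= g (x k).
  rewrite (gE (x k) (maxn (M (x k)) k.+1)); last first.
    by move=> j jk; apply: HM; apply: leq_trans jk; apply: leq_maxl.
  apply: le_trans (SS_mono h0 _ (leq_maxr _ _)).
  by rewrite SS_S hx mulr1 lerDr SS_ge0.
move=> kg; have := HB (x k).
have := le_trans (le_trans (ler_norm B) (ltW kB)) kg.
move=> c1 c2.
have : `|B| < `|B| by apply: lt_le_trans kB (le_trans kg (le_trans (ler_norm _) (le_trans c2 (ler_norm B)))).
by rewrite ltxx.
Qed.

Definition stP (X : topologicalType) (A U : set X) :=
  open U /\ U !=set0 /\ closure U `<=` A.

Definition st (X : topologicalType) : alpha_strategy X := fun s =>
  match pselect (exists U, stP (last set0 s) U) with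
  | left h => proj1_sig (cid h)
  | right _ => set0
  end.

Lemma stE (X : topologicalType) (reg : regular_space X) (V : nat -> set X) n :
  open (V n) -> V n !=set0 -> stP (V n) (alpha_moves (@st X) V n).
Proof.
move=> oV nV; rewrite /alpha_moves /st last_alpha.
case: pselect => [h|[]]; first exact: proj2_sig (cid h).
exact: shrink.
Qed.

Theorem corollary5p2 (X : topologicalType) :
  pseudocompact X -> sigma_star_CX_alpha_favorable X.
Proof.
move=> [[acc crs] bnd].
have reg := @completely_regular_regular RR X crs.
exists (@st X); split.
  move=> V n [H1 H2]; have [oV nV] := H1 n (leqnn n).
  have [oU [nU cU]] := stE reg oV nV.
  by split => //; split => //; apply: subset_trans cU; apply: subset_closure.
move=> V Vl a aU g gc.
set U := alpha_moves (@st X) V.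
have HU n : stP (V n) (U n).
  by have [H1 _] := Vl n; have [oV nV] := H1 n (leqnn n); apply: stE.
have Ustep n : U n.+1 `<=` U n.
  have [_ H2] := Vl n.+1; apply: subset_trans (H2 n (ltnSn n)).
  have [_ [_ cU]] := HU n.+1; apply: subset_trans cU; exact: subset_closure.
have Umono m k : (m <= k)%N -> U k `<=` U m.
  elim: k => [|k IH]; first by rewrite leqn0 => /eqP ->.
  rewrite leq_eqVlt => /orP [/eqP -> //|mk].
  exact: subset_trans (Ustep k) (IH mk).
pose W k := U k `&` g @^-1` ball (g (a k)) (k.+1%:R^-1).
have oW k : open (W k).
  apply: openI; first by have [] := HU k.
  apply: open_comp; last exact: (@ball_open RR RR^o).
  by move=> y _; apply: gc.
have nW k : W k !=set0.
  by exists (a k); split; [exact: aU | apply: ballxx; rewrite invr_gt0].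
have [t Ht] := cluster crs bnd oW nW.
exists t; split.
  move=> m _; have [_ [_ cU]] := HU m.+1; have [_ H2] := Vl m.+1.
  apply: (H2 m (ltnSn m)); apply: cU.
  move=> B Bt; have [k [mk [y [By [Wy _]]]]] := Ht B Bt m.+1.
  by exists y; split => //; apply: Umono mk _ Wy.
move=> B /nbhs_ballP [e e0 eB].
have e2 : 0 < e / 2 by apply: divr_gt0.
have [m _ Hm] := near_infty_natSinv_lt (PosNum e2).
have Nt : nbhs t (g @^-1` ball (g t) (e / 2)) by apply: gc; apply: nbhsx_ballx.
have [k [mk [y [Gy [_ Gy2]]]]] := Ht _ Nt m.
exists (g (a k)); split; first by exists k.
apply: eB.
have -> : e = e / 2 + e / 2 by rewrite -splitr.
have lk : k.+1%:R^-1 <= e / 2 by apply: ltW; exact: (Hm k mk).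
have Gy3 : ball (g y) (e / 2) (g (a k)) by apply: ball_sym; exact: (le_ball lk Gy2).
exact: (ball_triangle Gy Gy3).
Qed.
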